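(* Let $\eta_1,\dots,\eta_n$ be admissible measures on $\mathbb R$. For each $i$ let $M_i(dx):=\cosh(x)\,\eta_i(dx)$, let $X_i\sim M_i$ be independent, and $U_i:=\tanh(X_i)\in[-1,1]$. Define $\Psi(y_1,\dots,y_n):=\frac12\big(\prod_{i=1}^n(1+y_i)-\prod_{i=1}^n(1-y_i)\big)$. Then each $M_i$ is a probability measure, $\mathbb E U_i=0$ for every $i$, and \[ T(\eta_1*\cdots*\eta_n)=\mathbb E|\Psi(U_1,\dots,U_n)|. \] Moreover, if $\bar\eta:=\frac1n\sum_i\eta_i$, $\bar M(dx):=\cosh(x)\bar\eta(dx)=\frac1n\sum_iM_i(dx)$, $\bar X\sim\bar M$, $\bar U:=\tanh(\bar X)$, and $\bar U_1,\dots,\bar U_n$ are i.i.d. copies of $\bar U$, then $T(\bar\eta^{*n})=\mathbb E|\Psi(\bar U_1,\dots,\bar U_n)|$, and the law of $\bar U$ is the arithmetic average of the laws of $U_1,\dots,U_n$.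
   Context: A finitely supported positive measure $\eta$ on $\mathbb R$ is called admissible if $\int e^x\,\eta(dx)=\int e^{-x}\,\eta(dx)=1$. $T(\eta):=\frac12\int_{\mathbb R}|e^x-e^{-x}|\,\eta(dx)$. $*$ denotes convolution and $\eta^{*n}$ the $n$-fold self-convolution. *)

(* Defs.v *)
From HB Require Import structures.
From mathcomp Require Import all_boot all_order all_algebra.
From mathcomp Require Import all_classical all_reals.
From mathcomp Require Import sequences exp.
Set Implicit Arguments. Unset Strict Implicit. Unset Printing Implicit Defensive.
Import Order.TTheory GRing.Theory Num.Theory.
Local Open Scope ring_scope.
Local Open Scope classical_set_scope.

(* A finitely supported positive measure on R is represented as a finite
   list of atoms (x, w), standing for  sum_k w_k * delta_{x_k}, w_k >= 0. *)
Definition fmeas (R : realType) := seq (R * R).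

Section Defs.
Variable R : realType.

Definition cosh (x : R) : R := (expR x + expR (- x)) / 2.
Definition sinh (x : R) : R := (expR x - expR (- x)) / 2.
Definition tanh (x : R) : R := sinh x / cosh x.

Definition fpos (m : fmeas R) : Prop := forall p, p \in m -> 0 <= p.2.

Definition fint (m : fmeas R) (f : R -> R) : R := \sum_(p <- m) p.2 * f p.1.

Definition fmass (m : fmeas R) (A : set R) : R :=
  \sum_(p <- m) p.2 * (p.1 \in A)%:R.

Definition admissible (m : fmeas R) : Prop :=
  fpos m /\ fint m expR = 1 /\ fint m (fun x => expR (- x)) = 1.

Definition Tfun (m : fmeas R) : R :=
  (1 / 2) * fint m (fun x => `|expR x - expR (- x)|).

Definition fconv (m1 m2 : fmeas R) : fmeas R :=
  [seq (a.1 + b.1, a.2 * b.2) | a <- m1, b <- m2].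

Definition fdirac (x : R) : fmeas R := [:: (x, 1)].

Definition fconv_seq (ms : seq (fmeas R)) : fmeas R := foldr fconv (fdirac 0) ms.

Definition fconv_pow (m : fmeas R) (n : nat) : fmeas R := iter n (fconv m) (fdirac 0).

Definition fscale (c : R) (m : fmeas R) : fmeas R := [seq (p.1, c * p.2) | p <- m].
Definition fsum (ms : seq (fmeas R)) : fmeas R := flatten ms.

Definition coshM (m : fmeas R) : fmeas R := [seq (p.1, cosh p.1 * p.2) | p <- m].

Definition fpush (f : R -> R) (m : fmeas R) : fmeas R := [seq (f p.1, p.2) | p <- m].

Definition fprob (m : fmeas R) : Prop := fpos m /\ fmass m setT = 1.

(* Expectation of F(X_1,...,X_n) where X_1,...,X_n are independent,
   X_i ~ ms_i  (i.e. integral against the product measure). *)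
Fixpoint prodE (ms : seq (fmeas R)) (F : seq R -> R) : R :=
  match ms with
  | [::] => F [::]
  | m :: ms' => \sum_(p <- m) p.2 * prodE ms' (fun ys => F (p.1 :: ys))
  end.

Definition Psi (ys : seq R) : R :=
  (1 / 2) * (\prod_(y <- ys) (1 + y) - \prod_(y <- ys) (1 - y)).

End Defs.

(* Main.v *)
Require Import Defs.
From HB Require Import structures.
From mathcomp Require Import all_boot all_order all_algebra.
From mathcomp Require Import all_classical all_reals.
From mathcomp Require Import sequences exp.
From mathcomp Require Import ring lra.
Import Order.TTheory GRing.Theory Num.Theory.
Local Open Scope ring_scope.
Local Open Scope classical_set_scope.

Section Helpers.
Variable R : realType.

Lemma cosh_gt0 (x : R) : 0 < cosh x.
Proof. by rewrite /cosh divr_gt0 // addr_gt0 // expR_gt0. Qed.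

Lemma cosh_tanh (x : R) : cosh x * tanh x = sinh x.
Proof. by rewrite /tanh mulrC divfK // gt_eqF // cosh_gt0. Qed.

Lemma cosh_plus (x : R) : cosh x * (1 + tanh x) = expR x.
Proof. rewrite mulrDr mulr1 cosh_tanh /cosh /sinh; by field. Qed.

Lemma cosh_minus (x : R) : cosh x * (1 - tanh x) = expR (- x).
Proof. rewrite mulrBr mulr1 cosh_tanh /cosh /sinh; by field. Qed.

Lemma fint_conv (m1 m2 : fmeas R) f :
  fint (fconv m1 m2) f = fint m1 (fun x => fint m2 (fun y => f (x + y))).
Proof.
rewrite /fint /fconv big_allpairs_dep /=.
apply: eq_bigr => a _; rewrite mulr_sumr; apply: eq_bigr => b _.
by rewrite mulrA.
Qed.

Lemma prodE_scale (ms : seq (fmeas R)) c (F : seq R -> R) :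
  prodE ms (fun ys => c * F ys) = c * prodE ms F.
Proof.
elim: ms c F => [|m ms IH] c F //=.
rewrite mulr_sumr; apply: eq_bigr => p _.
by rewrite IH mulrCA.
Qed.

Lemma fint_conv_seq (ms : seq (fmeas R)) f :
  fint (fconv_seq ms) f = prodE ms (fun xs => f (\sum_(x <- xs) x)).
Proof.
elim: ms f => [|m ms IH] f /=.
  by rewrite /fint /fdirac big_cons big_nil big_nil addr0 mul1r.
rewrite fint_conv {1}/fint; apply: eq_bigr => p _.
rewrite IH; congr (_ * _).
congr (prodE _ _); apply: funext => ys; by rewrite big_cons.
Qed.

Lemma prodE_cosh (ms : seq (fmeas R)) (G : seq R -> R) :
  prodE [seq coshM m | m <- ms] G
  = prodE ms (fun xs => (\prod_(x <- xs) cosh x) * G xs).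
Proof.
elim: ms G => [|m ms IH] G /=; first by rewrite big_nil mul1r.
rewrite /coshM big_map; apply: eq_bigr => p _ /=.
rewrite IH (mulrC (cosh _)) -mulrA -prodE_scale; congr (_ * _).
congr (prodE _ _); apply: funext => ys; rewrite big_cons.
by rewrite mulrA (mulrC (cosh p.1)) -!mulrA.
Qed.

Lemma key (xs : seq R) :
  (1 / 2) * `|expR (\sum_(x <- xs) x) - expR (- \sum_(x <- xs) x)|
  = (\prod_(x <- xs) cosh x) * `|Psi (map (@tanh R) xs)|.
Proof.
have hp : 0 <= \prod_(x <- xs) cosh x.
  by apply: prodr_ge0 => x _; apply: ltW; apply: cosh_gt0.
rewrite -(ger0_norm hp) -normrM.
have -> : (\prod_(x <- xs) cosh x) * Psi [seq tanh x | x <- xs]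
   = 1 / 2 * (expR (\sum_(x <- xs) x) - expR (- \sum_(x <- xs) x)).
  rewrite /Psi !big_map mulrCA -sumrN !expR_sum mulrBr -!big_split /=.
  congr (_ * (_ - _)); apply: eq_bigr => x _.
    by rewrite cosh_plus.
  by rewrite cosh_minus.
by rewrite normrM (@ger0_norm _ (1 / 2)) // divr_ge0.
Qed.

Lemma Tfun_gen (ms : seq (fmeas R)) :
  Tfun (fconv_seq ms) = prodE [seq coshM m | m <- ms] (fun xs => `|Psi (map (@tanh R) xs)|).
Proof.
rewrite prodE_cosh /Tfun fint_conv_seq -prodE_scale.
by congr (prodE _ _); apply: funext => xs; rewrite key.
Qed.

Lemma avg_gen (etas : seq (fmeas R)) c (k : R -> R) :
  \sum_(p <- coshM (fscale c (fsum etas))) p.2 * k p.1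
  = c * \sum_(M <- [seq coshM eta | eta <- etas]) \sum_(p <- M) p.2 * k p.1.
Proof.
rewrite /coshM /fscale /fsum big_map big_map big_flatten big_map mulr_sumr.
apply: eq_bigr => eta _; rewrite big_map mulr_sumr; apply: eq_bigr => p _ /=.
by rewrite mulrCA !mulrA.
Qed.

Lemma pow_seq (m : fmeas R) k : fconv_pow m k = fconv_seq (nseq k m).
Proof. by rewrite /fconv_pow /fconv_seq; elim: k => [|k IH] //=; rewrite IH. Qed.

End Helpers.

Theorem lemma1 (R : realType) (etas : seq (fmeas R)) :
  (forall eta, eta \in etas -> admissible eta) ->
  let n := size etas in
  let Ms := [seq coshM eta | eta <- etas] in
  let etabar := fscale (n%:R)^-1 (fsum etas) in
  let Mbar := coshM etabar in
  (* each M_i is a probability measure and E U_i = 0 *)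
  (forall M, M \in Ms -> fprob M) /\
  (forall M, M \in Ms -> fint M (@tanh R) = 0) /\
  (* T(eta_1 * ... * eta_n) = E |Psi(U_1,...,U_n)|, U_i = tanh X_i, X_i ~ M_i indep. *)
  Tfun (fconv_seq etas) = prodE Ms (fun xs => `|Psi (map (@tanh R) xs)|) /\
  (* Mbar = (1/n) sum_i M_i *)
  (forall A : set R, fmass Mbar A = (n%:R)^-1 * \sum_(M <- Ms) fmass M A) /\
  (* T(etabar^{*n}) = E |Psi(Ubar_1,...,Ubar_n)|, Ubar_i i.i.d. copies of tanh(Xbar) *)
  Tfun (fconv_pow etabar n) = prodE (nseq n Mbar) (fun xs => `|Psi (map (@tanh R) xs)|) /\
  (* law of Ubar is the average of the laws of U_1,...,U_n *)
  (forall A : set R,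
     fmass (fpush (@tanh R) Mbar) A
     = (n%:R)^-1 * \sum_(M <- Ms) fmass (fpush (@tanh R) M) A).
Proof.
move=> hadm n Ms etabar Mbar.
split.
  move=> M /mapP [eta heta ->]; have [hpos [h1 h2]] := hadm _ heta.
  split.
    move=> p /mapP [q hq ->] /=.
    have hc := @cosh_gt0 R q.1; have hq2 := hpos q hq; by rewrite mulr_ge0 // ltW.
  rewrite /fmass /coshM big_map.
  transitivity ((fint eta expR + fint eta (fun x => expR (- x))) / 2).
    2: by rewrite h1 h2; field.
  rewrite /fint -big_split mulr_suml /=; apply: eq_bigr => p _.
  by rewrite in_setT mulr1 /cosh; field.
split.
  move=> M /mapP [eta heta ->]; have [hpos [h1 h2]] := hadm _ heta.
  rewrite /fint /coshM big_map.
  transitivity ((fint eta expR - fint eta (fun x => expR (- x))) / 2).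
    2: by rewrite h1 h2 subrr mul0r.
  rewrite /fint -sumrN -big_split mulr_suml /=; apply: eq_bigr => p _.
  rewrite (mulrC (cosh _)) -mulrA cosh_tanh /sinh; by field.
split; first exact: Tfun_gen.
split.
  by move=> A; rewrite /fmass /Mbar /etabar (@avg_gen R etas _ (fun x => (x \in A)%:R)).
split.
  have -> : fconv_pow etabar n = fconv_seq (nseq n etabar).
    exact: pow_seq.
  by rewrite Tfun_gen map_nseq.
move=> A; rewrite /fmass /fpush /Mbar big_map.
rewrite (@avg_gen R etas _ (fun x => ((tanh x) \in A)%:R)); congr (_ * _).
by rewrite /Ms; apply: eq_bigr => M _; rewrite big_map.
Qed.
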